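(* Let $\boldsymbol\alpha\in\mathbb C^d$, let $\boldsymbol\mu\in V(\boldsymbol\alpha)$ satisfy $\mathcal F(\boldsymbol\alpha+\boldsymbol\mu)=\mathcal F(\boldsymbol\alpha)$, and let $\tau$ be a face of the cone $\mathbb R_{\ge0}A$. Then $E_\tau(\boldsymbol\alpha+\boldsymbol\mu)=\emptyset$ if and only if $E_\tau(\boldsymbol\alpha)=\emptyset$. Moreover, if $E_\tau(\boldsymbol\alpha)\ne\emptyset$, then $E_\tau(\boldsymbol\alpha+\boldsymbol\mu)=\boldsymbol\mu+E_\tau(\boldsymbol\alpha)$.
   Context: $A\subset\mathbb Z^d$ is a finite set generating the group $\mathbb Z^d$; $\mathbb NA$ the monoid generated by $A$. For a facet $\sigma$ of the cone $\mathbb R_{\ge0}A$, $F_\sigma$ is its primitive integral support function: the unique linear form on $\mathbb R^d$ (extended $\mathbb C$-linearly to $\mathbb C^d$) with $F_\sigma(\mathbb R_{\ge0}A)\ge0$, $F_\sigma(\sigma)=0$, $F_\sigma(\mathbb Z^d)=\mathbb Z$. For $\boldsymbol\alpha\in\mathbb C^d$, $\mathcal F(\boldsymbol\alpha)=\{\sigma \text{ facet}: F_\sigma(\boldsymbol\alpha)\in\mathbb Z\}$ and $V(\boldsymbol\alpha)=\bigcap_{\sigma\in\mathcal F(\boldsymbol\alpha)}\{F_\sigma=0\}\subseteq\mathbb C^d$. For a face $\tau$, $E_\tau(\boldsymbol\alpha)=\{\boldsymbol\lambda\in\mathbb C(A\cap\tau)/\mathbb Z(A\cap\tau):\boldsymbol\alpha-\boldsymbol\lambda\in\mathbb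 NA+\mathbb Z(A\cap\tau)\}$. *)

(* Defs.v *)
From HB Require Import structures.
From mathcomp Require Import all_boot all_order all_algebra.
From mathcomp Require Import boolp classical_sets reals.
From mathcomp Require Import complex.
Set Implicit Arguments.
Unset Strict Implicit.
Unset Printing Implicit Defensive.
Import Order.TTheory GRing.Theory Num.Theory.
Local Open Scope ring_scope.
Local Open Scope classical_set_scope.

Section ToricDefs.
Variable R : realType.
Variable d : nat.
Variable A : seq 'rV[int]_d.

Definition realv (z : 'rV[int]_d) : 'rV[R]_d := map_mx (fun n : int => n%:~R) z.
Definition cplxv (z : 'rV[int]_d) : 'rV[complex R]_d :=
  map_mx (fun n : int => n%:~R) z.

Definition generates_lattice : Prop :=
  forall z : 'rV[int]_d, exists c : 'I_(size A) -> int,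
    z = \sum_(i < size A) c i *: A`_i.

Definition cone : set 'rV[R]_d :=
  [set x | exists c : 'I_(size A) -> R,
     (forall i, 0 <= c i) /\ x = \sum_(i < size A) c i *: realv A`_i].

Definition linform (f x : 'rV[R]_d) : R := \sum_(j < d) f 0 j * x 0 j.
Definition clinform (f : 'rV[R]_d) (x : 'rV[complex R]_d) : complex R :=
  \sum_(j < d) (real_complex R (f 0 j)) * x 0 j.

(* faces of the cone: intersections with supporting hyperplanes
   (f = 0 gives the cone itself) *)
Definition is_face (t : set 'rV[R]_d) : Prop :=
  exists f : 'rV[R]_d, (forall x, cone x -> 0 <= linform f x) /\
    t = cone `&` [set x | linform f x = 0].

Definition has_indep (S : set 'rV[R]_d) (n : nat) : Prop :=
  exists M : 'M[R]_(n, d), (forall i, S (row i M)) /\ row_free M.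
Definition has_dim (S : set 'rV[R]_d) (n : nat) : Prop :=
  has_indep S n /\ ~ has_indep S n.+1.

Definition is_facet (s : set 'rV[R]_d) : Prop :=
  is_face s /\ exists n, has_dim cone n.+1 /\ has_dim s n.

Definition is_primsupp (s : set 'rV[R]_d) (f : 'rV[R]_d) : Prop :=
  (forall x, cone x -> 0 <= linform f x) /\
  (forall x, s x -> linform f x = 0) /\
  [set linform f (realv z) | z in [set: 'rV[int]_d]] =
    [set (n%:~R : R) | n in [set: int]].

Definition Fsupp (s : set 'rV[R]_d) : 'rV[R]_d := xget 0 (is_primsupp s).

Definition is_int (z : complex R) : Prop := exists n : int, z = n%:~R.

Definition calF (alpha : 'rV[complex R]_d) : set (set 'rV[R]_d) :=
  [set s | is_facet s /\ is_int (clinform (Fsupp s) alpha)].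

Definition Vset (alpha : 'rV[complex R]_d) : set 'rV[complex R]_d :=
  [set mu | forall s, calF alpha s -> clinform (Fsupp s) mu = 0].

Definition inFace (t : set 'rV[R]_d) (i : 'I_(size A)) : bool :=
  `[< t (realv A`_i) >].

Definition Cspan (t : set 'rV[R]_d) : set 'rV[complex R]_d :=
  [set \sum_(i < size A | inFace t i) c i *: cplxv A`_i
     | c in [set: 'I_(size A) -> complex R]].

Definition Zspan (t : set 'rV[R]_d) : set 'rV[complex R]_d :=
  [set \sum_(i < size A | inFace t i) (c i)%:~R *: cplxv A`_i
     | c in [set: 'I_(size A) -> int]].

Definition NA : set 'rV[complex R]_d :=
  [set \sum_(i < size A) (c i)%:R *: cplxv A`_i
     | c in [set: 'I_(size A) -> nat]].

(* E_tau(alpha): a set of cosets lambda = lambda0 + Z(A∩tau) in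
   C(A∩tau)/Z(A∩tau) (each coset represented as a subset of C^d),
   such that alpha - lambda ⊆ NA + Z(A∩tau) *)
Definition Etau (t : set 'rV[R]_d) (alpha : 'rV[complex R]_d)
    : set (set 'rV[complex R]_d) :=
  [set L | exists lam0, Cspan t lam0 /\
     L = [set lam0 + z | z in Zspan t] /\
     exists y z, NA y /\ Zspan t z /\ alpha - lam0 = y + z].

Definition translate (mu : 'rV[complex R]_d) (L : set 'rV[complex R]_d) :=
  [set mu + x | x in L].

End ToricDefs.

(* Main.v *)
Require Import Defs.
From HB Require Import structures.
From mathcomp Require Import all_boot all_order all_algebra.
From mathcomp Require Import boolp classical_sets reals.
From mathcomp Require Import complex.
From mathcomp Require Import ring lra.
Import Order.TTheory GRing.Theory Num.Theory.
Local Open Scope ring_scope.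
Local Open Scope classical_set_scope.
Set Implicit Arguments.
Unset Strict Implicit.



Section Lin.
Variables (R : realType) (d : nat).
Implicit Types (f g x y : 'rV[R]_d).

Lemma linformE f x : linform f x = (x *m f^T) 0 0.
Proof. by rewrite /linform mxE; apply: eq_bigr => j _; rewrite mxE mulrC. Qed.

Lemma linformDr f x y : linform f (x + y) = linform f x + linform f y.
Proof. by rewrite !linformE mulmxDl mxE. Qed.
Lemma linformZr f c x : linform f (c *: x) = c * linform f x.
Proof. by rewrite !linformE -scalemxAl mxE. Qed.
Lemma linformNr f x : linform f (- x) = - linform f x.
Proof. by rewrite !linformE mulNmx mxE. Qed.
Lemma linformBr f x y : linform f (x - y) = linform f x - linform f y.
Proof. by rewrite linformDr linformNr. Qed.
Lemma linform0r f : linform f 0 = 0.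
Proof. by rewrite linformE mul0mx mxE. Qed.
Lemma linform_sumr f (I : finType) (P : pred I) (F : I -> 'rV[R]_d) :
  linform f (\sum_(i | P i) F i) = \sum_(i | P i) linform f (F i).
Proof.
rewrite linformE mulmx_suml summxE; apply: eq_bigr => i _; by rewrite linformE.
Qed.
Lemma linformDl f g x : linform (f + g) x = linform f x + linform g x.
Proof. by rewrite !linformE linearD /= mulmxDr mxE. Qed.
Lemma linformZl c f x : linform (c *: f) x = c * linform f x.
Proof. by rewrite !linformE linearZ /= -scalemxAr mxE. Qed.
Lemma linformNl f x : linform (- f) x = - linform f x.
Proof. by rewrite !linformE linearN /= mulmxN mxE. Qed.
Lemma linformBl f g x : linform (f - g) x = linform f x - linform g x.
Proof. by rewrite linformDl linformNl. Qed.
Lemma linform0l x : linform 0 x = 0.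
Proof. by rewrite /linform big1 // => j _; rewrite mxE mul0r. Qed.

Lemma col_mul' (F : pzSemiRingType) m n p (j : 'I_p) (M : 'M[F]_(m, n)) (C : 'M[F]_(n, p)) :
  M *m col j C = col j (M *m C).
Proof. by apply/matrixP => i k; rewrite !mxE; apply: eq_bigr => l _; rewrite !mxE. Qed.

Lemma ker_tool (F : fieldType) m (M : 'M[F]_(m, d)) :
  (\rank M < d)%N -> exists u : 'cV[F]_d, u != 0 /\ M *m u = 0.
Proof.
move=> hr.
have hc : cokermx M != 0.
  by rewrite -mxrank_eq0 mxrank_coker subn_eq0 -ltnNge.
have [j hj] : exists j, col j (cokermx M) != 0.
  apply/existsP; move: hc; apply: contraR; rewrite negb_exists => /forallP h.
  apply/eqP/matrixP => i j; have /eqP/matrixP/(_ i 0) := negbNE (h j).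
  by rewrite !mxE.
exists (col j (cokermx M)); split=> //.
by rewrite col_mul' mulmx_coker; apply/matrixP => i k; rewrite !mxE.
Qed.

Lemma full_ann (F : fieldType) m (M : 'M[F]_(m, d)) (u : 'cV[F]_d) :
  \rank M = d -> M *m u = 0 -> u = 0.
Proof.
move=> hr hu; have /row_fullP [B hB] : row_full M by rewrite /row_full hr.
by rewrite -[u]mul1mx -hB -mulmxA hu mulmx0.
Qed.

Lemma notin_tool m (M : 'M[R]_(m, d)) x : ~~ (x <= M)%MS ->
  exists g, linform g x != 0 /\ forall i, linform g (row i M) = 0.
Proof.
rewrite submxE => hx.
have [j hj] : exists j, (x *m cokermx M) 0 j != 0.
  apply/existsP; move: hx; apply: contraR; rewrite negb_exists => /forallP h.
  apply/eqP/matrixP => i j; rewrite ord1 (eqP (negbNE (h j))) mxE ?mxE.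
  by []. exists (trmx (col j (cokermx M))); split.
  by rewrite linformE trmxK col_mul' mxE.
move=> i; rewrite linformE trmxK col_mul' -row_mul mulmx_coker.
by rewrite !mxE.
Qed.

Lemma no_indep (S : set 'rV[R]_d) : ~ has_indep S d.+1.
Proof.
move=> [M [_ hM]]; move: (rank_leq_col M); rewrite (eqP hM).
by rewrite ltnn.
Qed.


End Lin.

Lemma prim d (v : 'cV[int]_d) : v != 0 -> exists (w : 'cV[int]_d) (k : int),
  k != 0 /\ v = k *: w /\ exists z0 : 'rV[int]_d, (z0 *m w) 0 0 = 1.
Proof.
move=> hv.
pose Pm m := `[< (0 < m)%N /\ exists z : 'rV[int]_d, (z *m v) 0 0 = m%:Z >].
have exP : exists m, Pm m.
  have [j hj] : exists j, v j ord0 != 0.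
    apply/existsP; move: hv; apply: contraR; rewrite negb_exists => /forallP h.
    apply/eqP/matrixP => i j; rewrite ord1 (eqP (negbNE (h i))) mxE.
    by [].
  exists (absz (v j ord0)); apply/asboolP; split; first by rewrite absz_gt0.
  exists ((sgz (v j ord0)) *: delta_mx 0 j); rewrite -scalemxAl -rowE mxE mxE.
  by rewrite abszEsg.
case: (ex_minnP exP) => g /asboolP [g0 [z0 hz0]] gmin.
have gz0 : (g%:Z != 0) by rewrite eqz_nat -lt0n.
have hdiv j : modz (v j ord0) g%:Z = 0 :> int.
  set r := modz (v j ord0) g%:Z.
  have r0 : 0 <= r by apply: modz_ge0.
  have rlt : r < g%:Z by apply: ltz_pmod; rewrite ltz_nat.
  apply/eqP; rewrite eq_le r0 andbT; rewrite leNgt; apply/negP => rpos.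
  have : Pm (absz r).
    apply/asboolP; split; first by rewrite absz_gt0 gt_eqF.
    exists (delta_mx 0 j - divz (v j ord0) g%:Z *: z0).
    have hz c : (c *: (z0 *m v)) 0 0 = c * g%:Z by rewrite mxE hz0.
    have hB (M N : 'cV[int]_1) : (M - N) 0 0 = M 0 0 - N 0 0 by rewrite !mxE.
    rewrite mulmxBl -scalemxAl -rowE hB hz mxE gez0_abs ?ltW //.
  move/gmin; rewrite leqNgt => /negP; apply.
  by rewrite -ltz_nat gez0_abs ?ltW.
pose w := \col_j divz (v j ord0) g%:Z.
have hvw : v = g%:Z *: w.
  apply/matrixP => i j; rewrite ord1 !mxE.
  by rewrite {1}(divz_eq (v i ord0) g%:Z) hdiv addr0 mulrC.
exists w, g%:Z; split => //; split => //; exists z0.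
apply: (mulfI gz0); rewrite mulr1 -[in RHS]hz0 hvw -scalemxAr [in RHS]mxE.
by [].
Qed.



Section Emb.
Variables (R : realType) (d : nat).
Lemma realvD (x y : 'rV[int]_d) : realv R (x + y) = realv R x + realv R y.
Proof. by apply/matrixP => i j; rewrite !mxE /= rmorphD. Qed.
Lemma realvZ (c : int) (x : 'rV[int]_d) : realv R (c *: x) = c%:~R *: realv R x.
Proof. by apply/matrixP => i j; rewrite !mxE /= rmorphM. Qed.
Lemma realv_sum (I : finType) (P : pred I) (F : I -> 'rV[int]_d) :
  realv R (\sum_(i | P i) F i) = \sum_(i | P i) realv R (F i).
Proof.
apply/matrixP => i j; rewrite !mxE !summxE rmorph_sum; apply: eq_bigr => k _.
by rewrite !mxE.
Qed.
Lemma linform_int (p q : 'rV[int]_d) :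
  linform (realv R p) (realv R q) = (\sum_j p 0 j * q 0 j)%:~R.
Proof. by rewrite /linform rmorph_sum; apply: eq_bigr => j _; rewrite !mxE rmorphM. Qed.
End Emb.

Section Key.
Variables (R : realType) (d : nat) (A : seq 'rV[int]_d).
Hypothesis hA : generates_lattice A.
Local Notation n := (size A).
Local Notation a i := (realv R A`_i).

Lemma fd (g : 'rV[R]_d) : (forall i : 'I_n, linform g (a i) = 0) -> g = 0.
Proof.
move=> hg; apply/matrixP => i j; rewrite ord1 [RHS]mxE.
have [c hc] := hA (delta_mx 0 j).
have : linform g (realv R (delta_mx 0 j)) = g 0 j.
  rewrite /linform (bigD1 j) //= big1 => [|k hk]; rewrite !mxE ?eqxx ?mulr1 ?addr0 //.
  by rewrite (negbTE hk) mulr0.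
rewrite hc realv_sum linform_sumr big1 // => k _.
by rewrite realvZ linformZr hg mulr0.
Qed.

Lemma cone_gen (i : 'I_n) : cone A (a i).
Proof.
exists (fun k => if k == i then 1 else 0); split; first by move=> k; case: eqP.
rewrite (bigD1 i) //= eqxx scale1r big1 ?addr0 // => k hk.
by rewrite (negbTE hk) scale0r.
Qed.

Lemma cone0 : cone A (0 : 'rV[R]_d).
Proof. by exists (fun _ => 0); split => //; rewrite big1 // => k _; rewrite scale0r. Qed.

Lemma cone_nonneg (h : 'rV[R]_d) : (forall i : 'I_n, 0 <= linform h (a i)) ->
  forall y, cone A y -> 0 <= linform h y.
Proof.
move=> hh y [c [hc ->]]; rewrite linform_sumr; apply: sumr_ge0 => i _.
by rewrite linformZr mulr_ge0.
Qed.


Definition Msel (P : pred 'I_n) : 'M[R]_(n, d) :=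
  \matrix_(i < n) (if P i then a i else 0).

Lemma row_Msel P i : row i (Msel P) = if P i then a i else 0.
Proof. by rewrite rowK. Qed.

Lemma span_sub (P : pred 'I_n) x : (x <= Msel P)%MS ->
  exists c : 'I_n -> R, x = \sum_(i < n | P i) c i *: a i.
Proof.
move=> /submxP [D ->]; exists (fun i => D 0 i).
rewrite mulmx_sum_row [RHS]big_mkcond /=; apply: eq_bigr => i _.
by rewrite row_Msel; case: (P i); rewrite ?scaler0.
Qed.

Lemma linform_col m (M : 'M[R]_(m, d)) (u : 'cV[R]_d) i :
  linform u^T (row i M) = (M *m u) i 0.
Proof. by rewrite linformE trmxK -row_mul mxE. Qed.

Lemma has_indep_rows (S : set 'rV[R]_d) m (M : 'M[R]_(m, d)) :
  (forall i, S (row i M)) -> has_indep S (\rank M).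
Proof.
move=> hS; exists (rowsub (maxrankfun M) M); split; last exact: maxrowsub_free.
by move=> k; rewrite row_rowsub.
Qed.

Lemma rank_full : \rank (Msel predT) = d.
Proof.
apply/eqP; rewrite eqn_leq rank_leq_col /=; rewrite leqNgt; apply/negP => hr.
have [u [hu0 hu]] := ker_tool hr.
have : u^T = 0.
  apply: fd => i; have := linform_col (Msel predT) u i.
  by rewrite row_Msel /= hu mxE.
by move/(congr1 trmx); rewrite trmxK trmx0 => hu'; rewrite hu' eqxx in hu0.
Qed.

Lemma cone_dim : has_indep (@cone R d A) d.
Proof.
have := @has_indep_rows (cone A) _ (Msel predT); rewrite rank_full; apply=> i.
by rewrite row_Msel; exact: cone_gen.
Qed.

Section Face.
Variables (tau : set 'rV[R]_d) (f : 'rV[R]_d).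
Hypothesis hf0 : forall y, cone A y -> 0 <= linform f y.
Hypothesis htau : tau = cone A `&` [set y | linform f y = 0].
Variable x : 'rV[R]_d.
Hypothesis hx : ~ exists c : 'I_n -> R, x = \sum_(i < n | inFace (A:=A) tau i) c i *: a i.

Definition Pr h := (forall i : 'I_n, 0 <= linform h (a i)) /\
  (forall i, inFace (A:=A) tau i -> linform h (a i) = 0) /\ linform h x != 0.

Lemma inFaceE i : inFace (A:=A) tau i = (linform f (a i) == 0).
Proof.
rewrite /inFace htau; apply/asboolP/eqP => [[_ ->] //| h].
by split; [exact: cone_gen | exact: h].
Qed.

Lemma Pr_exists : exists h, Pr h.
Proof.
have [g [hgx hg]] : exists g, linform g x != 0 /\
    forall i, linform g (row i (Msel (inFace (A:=A) tau))) = 0.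
  apply: notin_tool; apply/negP => /span_sub hs; exact: hx hs.
have hg0 i : inFace (A:=A) tau i -> linform g (a i) = 0.
  by move=> hi; have := hg i; rewrite row_Msel hi.
pose N := \sum_(i < n) 2 * `|linform g (a i)| / linform f (a i).
have hN i : ~~ inFace (A:=A) tau i -> 2 * `|linform g (a i)| <= N * linform f (a i).
  rewrite inFaceE => hfi.
  have fpos : 0 < linform f (a i) by rewrite lt_def hfi hf0 //; exact: cone_gen.
  rewrite -ler_pdivrMr // /N (bigD1 i) //= lerDl; apply: sumr_ge0 => k _.
  by rewrite divr_ge0 ?mulr_ge0 ?hf0 //; exact: cone_gen.
pose hk (k : R) := N *: f + k *: g.
have hkv k y : linform (hk k) y = N * linform f y + k * linform g y.
  by rewrite linformDl !linformZl.
have hkpos k : 0 <= k <= 2 -> forall i : 'I_n, 0 <= linform (hk k) (a i).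
  move=> /andP [k0 k2] i; rewrite hkv.
  have [hi|hi] := boolP (inFace (A:=A) tau i).
    by rewrite hg0 // (eqP (etrans (esym (inFaceE i)) hi)) !mulr0 addr0.
  have H3 := hN i hi.
  have H1 : - (k * `|linform g (a i)|) <= k * linform g (a i).
    rewrite -mulrN; apply: ler_wpM2l => //; rewrite lerNl -normrN; exact: ler_norm.
  have H2 : k * `|linform g (a i)| <= 2 * `|linform g (a i)|.
    by apply: ler_wpM2r.
  lra.
have hkface k (i : 'I_n) : inFace (A:=A) tau i -> linform (hk k) (a i) = 0.
  move=> hi; rewrite hkv hg0 // (eqP (etrans (esym (inFaceE i)) hi)).
  by rewrite !mulr0 addr0.
have [h1|h1] := eqVneq (linform (hk 1) x) 0.
  exists (hk 2); split; first by apply: hkpos; rewrite ler0n lexx.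
  split; first exact: hkface.
  move: h1; rewrite !hkv => h1.
  have -> : N * linform f x + 2 * linform g x = linform g x.
    rewrite -[RHS]add0r -h1; ring.
  exact: hgx.
exists (hk 1); split; first by apply: hkpos; rewrite ler01 ler1n.
by split; first exact: hkface.
Qed.


Definition Zs (h : 'rV[R]_d) : {set 'I_n} := [set i : 'I_n | linform h (a i) == 0]%SET.

Lemma Pr_max : exists h, Pr h /\ forall h', Pr h' -> (#|Zs h'| <= #|Zs h|)%N.
Proof.
pose Pm k := `[< exists h, Pr h /\ #|Zs h| = k >].
have exP : exists k, Pm k.
  have [h hh] := Pr_exists; exists #|Zs h|; apply/asboolP; by exists h.
have ubP : forall k, Pm k -> (k <= n)%N.
  move=> k /asboolP [h [_ <-]]; rewrite -[X in (_ <= X)%N]card_ord; exact: max_card.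
case: (ex_maxnP exP ubP) => k /asboolP [h [hh hk]] hmax.
exists h; split=> // h' hh'; rewrite hk; apply: hmax; apply/asboolP; by exists h'.
Qed.

Variable h : 'rV[R]_d.
Hypothesis hh : Pr h.
Hypothesis hmax : forall h', Pr h' -> (#|Zs h'| <= #|Zs h|)%N.

Lemma ker_aux (g : 'rV[R]_d) : (forall i, i \in Zs h -> linform g (a i) = 0) ->
  linform g x = 0 -> forall i : 'I_n, 0 <= linform g (a i).
Proof.
move=> hgZ hgx i0; rewrite leNgt; apply/negP => hneg.
have [hpos [hface hx0]] := hh.
pose P := fun i : 'I_n => linform g (a i) < 0.
pose F := fun i : 'I_n => linform h (a i) / - linform g (a i).
case: (@arg_minP _ _ _ i0 P F hneg) => j hj hminj.
pose t := F j.
have t0 : 0 <= t by rewrite /t /F divr_ge0 // oppr_ge0 ltW.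
pose h' := h + t *: g.
have hv y : linform h' y = linform h y + t * linform g y.
  by rewrite linformDl linformZl.
have hh' : Pr h'.
  split; last split.
  - move=> i; rewrite hv; have [gi|gi] := leP 0 (linform g (a i)).
      by apply: addr_ge0; [exact: hpos | exact: mulr_ge0].
    have hti : t * (- linform g (a i)) <= linform h (a i).
      by rewrite -ler_pdivlMr ?oppr_gt0 //; exact: hminj.
    rewrite mulrN in hti; lra.
  - move=> i hi; have hZ : i \in Zs h by rewrite inE hface.
    by rewrite hv hface // hgZ // mulr0 addr0.
  - by rewrite hv hgx mulr0 addr0.
have hjZ : j \notin Zs h.
  apply/negP; rewrite inE => /eqP hj0; move: hj; rewrite /P hgZ ?ltxx //.
  by rewrite inE hj0.
have hsub : (j |: Zs h)%SET \subset Zs h'.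
  apply/fintype.subsetP => i; rewrite !inE => /orP [/eqP ->|/eqP hi].
    rewrite hv /t /F; apply/eqP.
    have gn : linform g (a j) != 0 by rewrite lt_eqF.
    by field.
  by rewrite hv hi hgZ ?mulr0 ?addr0 // inE hi.
have := subset_leq_card hsub; rewrite cardsU1 hjZ add1n => hc.
by have := leq_trans hc (hmax hh'); rewrite ltnn.
Qed.

Lemma ker_Zs (g : 'rV[R]_d) : (forall i, i \in Zs h -> linform g (a i) = 0) ->
  linform g x = 0 -> g = 0.
Proof.
move=> hgZ hgx; apply: fd => i; apply/le_anti/andP; split; last exact: ker_aux.
have H : 0 <= linform (- g) (a i).
  apply: ker_aux; last by rewrite linformNl hgx oppr0.
  by move=> k hk; rewrite linformNl hgZ ?oppr0.
by rewrite linformNl oppr_ge0 in H.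
Qed.

Lemma ker_Zs' (g : 'rV[R]_d) : (forall i, i \in Zs h -> linform g (a i) = 0) ->
  g = (linform g x / linform h x) *: h.
Proof.
have [_ [_ hx0]] := hh.
move=> hgZ; apply/eqP; rewrite -subr_eq0; apply/eqP; apply: ker_Zs.
  move=> i hi; rewrite linformBl linformZl hgZ //.
  by move: hi; rewrite inE => /eqP ->; rewrite mulr0 subr0.
by rewrite linformBl linformZl divfK ?subrr.
Qed.


Lemma hx0 : linform h x != 0.
Proof. by have [_ [_ ->]] := hh. Qed.

Lemma d_pos : (0 < d)%N.
Proof.
rewrite lt0n; apply/eqP => d0; move: hx0; rewrite /linform big1 ?eqxx // => j _.
by have := ltn_ord j; rewrite {2}d0.
Qed.

Definition MZ := Msel (fun i => i \in Zs h).

Lemma mulmx_tr_row m (M : 'M[R]_(m, d)) (u : 'rV[R]_d) i :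
  (M *m u^T) i 0 = linform u (row i M).
Proof. by rewrite linformE -row_mul [RHS]mxE. Qed.

Lemma MZ_row i : linform h (row i MZ) = 0.
Proof.
rewrite row_Msel; case: ifP => [|_]; last by rewrite linform0r.
by rewrite inE => /eqP.
Qed.

Lemma ann_h m (M : 'M[R]_(m, d)) : (forall i, linform h (row i M) = 0) -> \rank M <> d.
Proof.
move=> hM hr; have : h^T = 0.
  apply: (full_ann hr); apply/matrixP => i j; rewrite ord1 mulmx_tr_row hM mxE.
  by [].
move/(congr1 trmx); rewrite trmxK trmx0 => h0; move: hx0; rewrite h0 linform0l.
by rewrite eqxx.
Qed.

Lemma rank_MZ : \rank MZ = d.-1.
Proof.
have hlt : (\rank MZ < d)%N.
  rewrite ltn_neqAle rank_leq_col andbT; apply/eqP; apply: ann_h; exact: MZ_row.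
apply/eqP; rewrite eqn_leq -ltnS prednK ?d_pos // hlt /=.
rewrite leqNgt; apply/negP => hlt2.
pose M2 := col_mx MZ x.
have rk2 : (\rank M2 < d)%N.
  rewrite /M2 -addsmxE; case: (mxrank_adds_leqif MZ x) => hle _.
  apply: leq_ltn_trans hle _; apply: leq_trans (_ : (\rank MZ + 1 < d)%N).
    by rewrite ltnS leq_add2l rank_leq_row.
  move: hlt2 d_pos; move: (d) (\rank MZ) => [|k] r //= h1 _; by rewrite addn1 ltnS.
have [u [u0 hu]] := ker_tool rk2.
have : u^T = 0.
  apply: ker_Zs.
    move=> i hi; have := linform_col M2 u (lshift 1 i); rewrite rowKu hu mxE.
    by rewrite row_Msel hi.
  have := linform_col M2 u (rshift n 0); rewrite rowKd hu mxE.
  by have -> : row 0 x = x by apply/rowP => j; rewrite mxE.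
move/(congr1 trmx); rewrite trmxK trmx0 => h0; by rewrite h0 eqxx in u0.
Qed.

Lemma int_kernel : exists v : 'cV[int]_d, v != 0 /\
  forall i, i \in Zs h -> linform (realv R v^T) (a i) = 0.
Proof.
pose MZq : 'M[rat]_(n, d) :=
  \matrix_(i, j) (if i \in Zs h then ((A`_i) 0 j)%:~R else 0).
have hmap : map_mx ratr MZq = MZ.
  apply/matrixP => i j; rewrite !mxE; case: ifP => _; rewrite ?mxE ?ratr_int //.
  by rewrite rmorph0.
have rk : (\rank MZq < d)%N.
  by rewrite -(mxrank_map (@ratr R)) hmap rank_MZ prednK ?d_pos.
have [u [u0 hu]] := ker_tool rk.
pose D : int := \prod_(k < d) denq (u k 0).
pose v : 'cV[int]_d := \col_j (numq (u j 0) * \prod_(k < d | k != j) denq (u k 0)).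
have hv : map_mx (fun z : int => z%:~R : rat) v = D%:~R *: u.
  apply/matrixP => j k; rewrite ord1 !mxE /= (@intrM rat) numqE /D [in RHS](bigD1 j) //= (@intrM rat).
  ring.
have D0 : (D%:~R : rat) != 0 by rewrite intr_eq0 gt_eqF // prodr_gt0 // => k _.
exists v; split.
  apply/negP => /eqP v0.
  have : D%:~R *: u = 0.
    rewrite -hv v0; apply/matrixP => i j; rewrite !mxE.
    by [].
  by move/eqP; rewrite scaler_eq0 (negbTE D0) (negbTE u0).
move=> i hi.
have -> : realv R v^T = (map_mx ratr (map_mx (fun z : int => z%:~R : rat) v))^T.
  by apply/matrixP => k j; rewrite !mxE ratr_int.
have -> : a i = row i MZ by rewrite row_Msel hi.
rewrite linform_col -hmap -map_mxM hv -scalemxAr hu scaler0.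
by rewrite !mxE rmorph0.
Qed.

Definition sigma : set 'rV[R]_d := cone A `&` [set y | linform h y = 0].

Lemma hpos : forall i : 'I_n, 0 <= linform h (a i).
Proof. by have [? _] := hh. Qed.

Lemma sigma_a i : i \in Zs h -> sigma (a i).
Proof. move=> hi; split; first exact: cone_gen. by move: hi; rewrite inE; move/eqP. Qed.

Lemma primsupp_exists : exists F, is_primsupp A sigma F.
Proof.
have [v [v0 hvZ]] := int_kernel.
have [w [k [k0 [hvk [z0 hz0]]]]] := prim v0.
pose wR := realv R w^T.
have hwZ i : i \in Zs h -> linform wR (a i) = 0.
  move=> hi; have := hvZ i hi; rewrite hvk linearZ /= realvZ linformZl.
  by move/eqP; rewrite mulf_eq0 intr_eq0 (negbTE k0) /= => /eqP.
have hw1 : linform wR (realv R z0) = 1.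
  rewrite linform_int.
  have -> : \sum_j (w^T) 0 j * z0 0 j = 1.
    by rewrite -hz0 mxE; apply: eq_bigr => j _; rewrite mxE mulrC.
  by rewrite mulr1z.
pose c := linform wR x / linform h x.
have hwc : wR = c *: h := ker_Zs' hwZ.
have c0 : c != 0.
  apply/negP => /eqP c0; move: hw1; rewrite hwc c0 scale0r linform0l => /eqP.
  by rewrite eq_sym oner_eq0.
pose s : int := if 0 < c then 1 else -1.
have ss : s * s = 1 by rewrite /s; case: ifP => _; rewrite ?mulr1 ?mulrNN ?mulr1.
have spos : 0 < s%:~R * c.
  rewrite /s; case: ifP => hc; first by rewrite mul1r.
  rewrite mulN1r oppr_gt0 lt_neqAle c0 andTb; rewrite leNgt hc //.
pose F := realv R (s *: w^T).
have hF : F = (s%:~R * c) *: h by rewrite /F realvZ -/wR hwc scalerA.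
exists F; split; last split.
- move=> y hy; rewrite hF linformZl; apply: mulr_ge0; first exact: ltW.
  exact: (cone_nonneg hpos).
- by move=> y [_ hy]; rewrite hF linformZl hy mulr0.
- apply/seteqP; split => r /=.
    by move=> [z _ <-]; exists (\sum_j (s *: w^T) 0 j * z 0 j) => //; rewrite linform_int.
  move=> [m _ <-]; exists ((m * s) *: z0) => //.
  rewrite realvZ linformZr /F realvZ linformZl -/wR hw1 mulr1 -intrM -mulrA ss.
  by rewrite mulr1.
Qed.

Lemma facet_sigma : is_facet A sigma.
Proof.
split; first by exists h; split; [exact: (cone_nonneg hpos) | by []].
exists d.-1; split.
  rewrite prednK ?d_pos //; split; [exact: cone_dim | exact: no_indep].
split.
  have := @has_indep_rows sigma _ MZ; rewrite rank_MZ; apply => i.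
  rewrite row_Msel; case: ifP => hi; first exact: sigma_a.
  by split; [exact: cone0 | exact: linform0r].
rewrite prednK ?d_pos // => -[M [hM hfree]].
apply: (@ann_h _ M); first by move=> i; have [_ ->] := hM i.
exact/eqP.
Qed.

Lemma Fsupp_x : linform (Fsupp A sigma) x != 0.
Proof.
have hP : is_primsupp A sigma (Fsupp A sigma).
  rewrite /Fsupp; exact: (xgetPex 0 primsupp_exists).
have [_ [hG0 hGim]] := hP.
have hGZ i : i \in Zs h -> linform (Fsupp A sigma) (a i) = 0.
  by move=> hi; apply: hG0; exact: sigma_a.
have hG := ker_Zs' hGZ.
apply/negP => /eqP hGx; rewrite hGx mul0r scale0r in hG.
move: hGim; rewrite hG => him.
have : [set (n%:~R : R) | n in [set: int]] 1 by exists 1.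
rewrite -him => -[z _]; rewrite linform0l => /eqP; by rewrite eq_sym oner_eq0.
Qed.

End Face.

Lemma key (tau : set 'rV[R]_d) (htau : is_face A tau) (x : 'rV[R]_d) :
  ~ (exists c : 'I_n -> R, x = \sum_(i < n | inFace (A:=A) tau i) c i *: a i) ->
  exists s, is_facet A s /\ (forall i, inFace (A:=A) tau i -> s (a i)) /\
    is_primsupp A s (Fsupp A s) /\ linform (Fsupp A s) x != 0.
Proof.
move=> hx; have [f [hf0 htau']] := htau.
have [h [hh hmax]] := Pr_max hf0 htau' hx.
exists (sigma h); split; first exact: facet_sigma hh hmax.
split.
  move=> i hi; split; first exact: cone_gen.
  by have [_ [H _]] := hh; exact: H.
split; last exact: Fsupp_x hh hmax.
rewrite /Fsupp; apply: xgetPex; exact: (primsupp_exists hh hmax).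
Qed.

End Key.



Section Cplx.
Variables (R : realType) (d : nat).
Implicit Types (F : 'rV[R]_d) (x y : 'rV[R[i]]_d).

Lemma clinformD F x y : clinform F (x + y) = clinform F x + clinform F y.
Proof. by rewrite /clinform -big_split; apply: eq_bigr => j _; rewrite mxE mulrDr. Qed.
Lemma clinformZ F c x : clinform F (c *: x) = c * clinform F x.
Proof. by rewrite /clinform mulr_sumr; apply: eq_bigr => j _; rewrite mxE mulrCA. Qed.
Lemma clinformN F x : clinform F (- x) = - clinform F x.
Proof. by rewrite -scaleN1r clinformZ mulN1r. Qed.
Lemma clinform_sum F (I : finType) (P : pred I) (G : I -> 'rV[R[i]]_d) :
  clinform F (\sum_(i | P i) G i) = \sum_(i | P i) clinform F (G i).
Proof.
rewrite /clinform exchange_big /=; apply: eq_bigr => j _.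
by rewrite summxE mulr_sumr.
Qed.
Lemma clinform_cplxv F (z : 'rV[int]_d) :
  clinform F (cplxv R z) = (linform F (realv R z))%:C%C.
Proof.
rewrite /clinform /linform rmorph_sum; apply: eq_bigr => j _.
by rewrite !mxE rmorphM rmorph_int.
Qed.

Definition reV x : 'rV[R]_d := map_mx (@complex.Re R) x.
Definition imV x : 'rV[R]_d := map_mx (@complex.Im R) x.

Lemma clinform_dec F x :
  clinform F x = (linform F (reV x))%:C%C + 'i%C * (linform F (imV x))%:C%C.
Proof.
rewrite /clinform /linform !rmorph_sum mulr_sumr -big_split; apply: eq_bigr => j _.
rewrite !mxE {1}[x 0 j]complexE mulrDr mulrCA -!rmorphM /=. by [].
Qed.

Lemma complex0 (u v : R) : (u%:C + 'i * v%:C)%C = 0 -> u = 0 /\ v = 0.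
Proof.
move/eqP; rewrite eq_complex /=; simpc => /andP [/eqP hu /eqP hv].
by split; [move: hu | move: hv]; rewrite /= ?mulr0 ?mul1r ?mul0r ?addr0 ?add0r ?subr0.
Qed.

End Cplx.

Section Main.
Variables (R : realType) (d : nat) (A : seq 'rV[int]_d).
Local Notation n := (size A).
Local Notation a i := (realv R A`_i).
Local Notation CS t := (@Cspan R d A t).

Lemma Cspan_add t u v : CS t u -> CS t v -> CS t (u + v).
Proof.
move=> [c _ <-] [e _ <-]; exists (fun i => c i + e i) => //.
by rewrite -big_split; apply: eq_bigr => i _; rewrite scalerDl.
Qed.

Lemma Cspan_opp t u : CS t u -> CS t (- u).
Proof.
move=> [c _ <-]; exists (fun i => - c i) => //.
by rewrite -sumrN; apply: eq_bigr => i _; rewrite scaleNr.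
Qed.

Lemma transl t (mu alpha : 'rV[R[i]]_d) : CS t mu ->
  Etau A t (alpha + mu) = [set translate mu L | L in Etau A t alpha].
Proof.
move=> hmu; apply/seteqP; split => L.
  move=> [lam0 [hl [-> [y [z [hy [hz hal]]]]]]].
  exists [set (lam0 - mu) + z0 | z0 in Zspan A t].
    exists (lam0 - mu); split; first by apply: Cspan_add => //; exact: Cspan_opp.
    split => //; exists y, z; split => //; split => //.
    by rewrite -hal opprB addrA addrC addrA [X in X + _]addrC.
  have e1 z0 : mu + (lam0 - mu + z0) = lam0 + z0.
    by rewrite addrA [mu + _]addrC subrK.
  apply/seteqP; split => w.
    by move=> [_ [z0 hz0 <-] <-]; exists z0 => //; rewrite e1.
  move=> [z0 hz0 <-]; exists (lam0 - mu + z0); first by exists z0.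
  by rewrite e1.
move=> [L0 [lam0 [hl [-> [y [z [hy [hz hal]]]]]]] <-].
exists (mu + lam0); split; first exact: Cspan_add.
split.
  apply/seteqP; split => w.
    by move=> [_ [z0 hz0 <-] <-]; exists z0 => //; rewrite addrA.
  by move=> [z0 hz0 <-]; exists (lam0 + z0); [exists z0 | rewrite addrA].
exists y, z; split => //; split => //.
by rewrite -hal opprD addrA addrK.
Qed.

Lemma is_int_add (u v : R[i]) : is_int u -> is_int v -> is_int (u + v).
Proof. by move=> [p ->] [q ->]; exists (p + q); rewrite rmorphD. Qed.

Lemma is_int_sum (I : finType) (P : pred I) (G : I -> R[i]) :
  (forall i, P i -> is_int (G i)) -> is_int (\sum_(i | P i) G i).
Proof.
move=> hG; apply: (big_ind (@is_int R)) => //; first by exists 0.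
exact: is_int_add.
Qed.

End Main.

Section Main2.
Variables (R : realType) (d : nat) (A : seq 'rV[int]_d).
Hypothesis hA : generates_lattice A.
Local Notation n := (size A).
Local Notation a i := (realv R A`_i).
Local Notation CS t := (@Cspan R d A t).

Lemma Cspan_of_E (tau : set 'rV[R]_d) (htau : is_face A tau) (alpha mu : 'rV[R[i]]_d) :
  (exists L, Etau A tau alpha L) -> Vset A alpha mu -> CS tau mu.
Proof.
move=> [L [lam0 [hl [_ [y [z [hy [hz hal]]]]]]]] hmu.
have hF s : is_facet A s -> (forall i : 'I_n, inFace (A:=A) tau i -> s (a i)) ->
    is_primsupp A s (Fsupp A s) -> clinform (Fsupp A s) mu = 0.
  move=> hs hsub hP; apply: hmu; split => //.
  have [_ [hP0 hPim]] := hP.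
  have hface0 (c : 'I_n -> R[i]) : clinform (Fsupp A s)
      (\sum_(i < n | inFace (A:=A) tau i) c i *: cplxv R A`_i) = 0.
    rewrite clinform_sum big1 // => i hi; rewrite clinformZ clinform_cplxv hP0.
      by rewrite rmorph0 mulr0.
    exact: hsub.
  have -> : alpha = lam0 + (y + z) by rewrite -hal addrC subrK.
  rewrite !clinformD.
  move: hl hz => [c _ <-] [e _ <-]; rewrite !hface0 add0r addr0.
  move: hy => [c' _ <-]; rewrite clinform_sum; apply: is_int_sum => i _.
  rewrite clinformZ clinform_cplxv.
  have : [set (k%:~R : R) | k in [set: int]] (linform (Fsupp A s) (a i)).
    by rewrite -hPim; exists A`_i.
  move=> [k _ <-]; exists ((c' i)%:Z * k); rewrite rmorph_int intrM -pmulrn.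
  by [].
have hre v : (forall s, is_facet A s -> (forall i : 'I_n, inFace (A:=A) tau i -> s (a i)) ->
    is_primsupp A s (Fsupp A s) -> linform (Fsupp A s) v = 0) ->
    exists c : 'I_n -> R, v = \sum_(i < n | inFace (A:=A) tau i) c i *: a i.
  move=> hv; apply: contrapT => hn; have [s [h1 [h2 [h3 h4]]]] := key hA htau hn.
  by rewrite hv // eqxx in h4.
have [c hc] := hre (reV mu) (fun s h1 h2 h3 =>
  (complex0 (etrans (esym (clinform_dec _ _)) (hF s h1 h2 h3))).1).
have [e he] := hre (imV mu) (fun s h1 h2 h3 =>
  (complex0 (etrans (esym (clinform_dec _ _)) (hF s h1 h2 h3))).2).
exists (fun i => (c i)%:C%C + 'i%C * (e i)%:C%C) => //.
apply/rowP => j; rewrite [RHS]complexE.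
have hr : complex.Re (mu 0 j) = \sum_(i < n | inFace (A:=A) tau i) c i * (A`_i 0 j)%:~R.
  have := congr1 (fun M : 'rV[R]_d => M 0 j) hc; rewrite /reV mxE summxE => ->.
  by apply: eq_bigr => i _; rewrite !mxE.
have hi : complex.Im (mu 0 j) = \sum_(i < n | inFace (A:=A) tau i) e i * (A`_i 0 j)%:~R.
  have := congr1 (fun M : 'rV[R]_d => M 0 j) he; rewrite /imV mxE summxE => ->.
  by apply: eq_bigr => i _; rewrite !mxE.
rewrite hr hi summxE !rmorph_sum mulr_sumr -big_split; apply: eq_bigr => i _.
rewrite !mxE !rmorphM !rmorph_int /=; ring.
Qed.

End Main2.

Theorem lemma7p2 (R : realType) (d : nat) (A : seq 'rV[int]_d)
  (hA : generates_lattice A)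
  (alpha mu : 'rV[complex R]_d) (tau : set 'rV[R]_d)
  (hmu : Vset A alpha mu)
  (hF : calF A (alpha + mu) = calF A alpha)
  (htau : is_face A tau) :
  (Etau A tau (alpha + mu) = set0 <-> Etau A tau alpha = set0) /\
  (Etau A tau alpha <> set0 ->
     Etau A tau (alpha + mu) = [set translate mu L | L in Etau A tau alpha]).
Proof.
have hmu' : Vset A (alpha + mu) (- mu).
  by move=> s; rewrite hF => hs; rewrite clinformN (hmu s hs) oppr0.
have C1 : (exists L, Etau A tau alpha L) -> Cspan A tau mu.
  by move=> h; exact: (Cspan_of_E hA htau h hmu).
have C2 : (exists L, Etau A tau (alpha + mu) L) -> Cspan A tau mu.
  move=> h; have := Cspan_of_E hA htau h hmu'; move/Cspan_opp.
  by rewrite opprK.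
have ne (E : set (set 'rV[complex R]_d)) : E <> set0 -> exists L, E L.
  by move=> /eqP /set0P.
split.
  split => H.
    apply: contrapT => hne; have hex := ne _ hne; have hc := C1 hex.
    move: H; rewrite (transl alpha hc) => H.
    have [L hL] := hex.
    have : [set translate mu L | L in Etau A tau alpha] (translate mu L) by exists L.
    by rewrite H.
  apply: contrapT => hne; have [L hL] := ne _ hne; have hc := C2 (ex_intro _ L hL).
  move: hL; rewrite (transl alpha hc) => -[L0 hL0 _].
  by rewrite H in hL0.
move=> hne; exact: (transl alpha (C1 (ne _ hne))).
Qed.
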